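(* Let $G$ be a connected plane graph on $n$ vertices whose infinite face is bounded by a simple triangle, and let $\mathcal{K}$ be its component tree with the cost function defined below. Then there is a constant $c$ (independent of $G$) such that for every integer $w\ge 1$ there exists an integer $\delta\in[0,w)$ such that the total cost of all nodes of $\mathcal{K}$ at depths $\delta,\delta+w,\delta+2w,\ldots$ is at most $c\,n/w$.
   Context: The face-vertex incidence graph $FV(G)$ has a node for every vertex and every face of $G$, with an edge between a vertex $v$ and a face $f$ whenever $v$ is incident to $f$. Run a breadth-first search in $FV(G)$ from the node of the infinite face; the level of a face or vertex is its depth in this BFS tree (so the infinite face has level 0). For each even integer $i\ge 2$, a level-$i$ component is a connected component of the subgraph of $G$ induced by the faces of level at least $i$. The component tree $\mathcal{K}$ has the level components as nodes, where a level component $K$ is an ancestor of $K'$ if the set of faces of $K$ contains the set of faces of $K'$; its root is the component consisting of all faces of $G$ except the infinite face. The boundary of a component $K$ is the set of edges incident both to a face in $K$ and to a face not in $K$; it is a simple cycle $C_K$, and boundaries of distinct components are edge-disjoint. The cost of a node $K$ is the length (number of edges) of $C_K$. *)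

(* Defs.v *)
(* Plane graphs are represented as combinatorial maps
   (rotation systems): a finite set of darts D, a fixed-point-free edge
   involution [ed] and a vertex rotation permutation [nd]. *)
From mathcomp Require Import all_boot all_order all_algebra.
Set Implicit Arguments. Unset Strict Implicit. Unset Printing Implicit Defensive.

Section PlaneMap.
Variables (D : finType) (ed nd : D -> D).

Definition fperm (d : D) : D := nd (ed d).

Definition vertex_of (d : D) : {set D} := [set x | fconnect nd d x].
Definition face_of (d : D) : {set D} := [set x | fconnect fperm d x].
Definition edge_of (d : D) : {set D} := [set d; ed d].

Definition vertices : {set {set D}} := [set vertex_of d | d : D].
Definition faces : {set {set D}} := [set face_of d | d : D].
Definition edges : {set {set D}} := [set edge_of d | d : D].

Definition is_map : Prop :=
  involutive ed /\ (forall d, ed d != d) /\ injective nd.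

Definition map_connected : Prop :=
  forall d d' : D, connect (fun x y => (y == ed x) || (y == nd x)) d d'.

(* genus 0 (Euler's formula) : the map is a plane embedding *)
Definition map_planar : Prop :=
  #|vertices| + #|faces| = #|edges| + 2.

Definition map_simple : Prop :=
  (forall d, vertex_of (ed d) != vertex_of d) /\
  (forall d d', vertex_of d = vertex_of d' ->
                vertex_of (ed d) = vertex_of (ed d') -> d = d').

(* nodes: inl v for a vertex v, inr f for a face f *)
Definition fvnode := ({set D} + {set D})%type.

Definition fv_adj : rel fvnode := fun x y =>
  match x, y with
  | inl v, inr f | inr f, inl v =>
      [&& v \in vertices, f \in faces & v :&: f != set0]
  | _, _ => false
  end.

Fixpoint reach (f0 : {set D}) (k : nat) : {set fvnode} :=
  match k with
  | 0 => [set inr f0]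
  | k'.+1 => reach f0 k' :|: [set y | [exists x in reach f0 k', fv_adj x y]]
  end.

Definition fv_bound : nat := #|{: fvnode}|.

(* BFS level (depth in the BFS tree from the infinite face); all nodes
   are reached within fv_bound steps in a connected map *)
Definition level (f0 : {set D}) (x : fvnode) : nat :=
  \big[minn/fv_bound]_(k < fv_bound.+1 | x \in reach f0 k) k.

Definition high_faces (f0 : {set D}) (i : nat) : {set {set D}} :=
  [set f in faces | i <= level f0 (inr f)].

Definition high_adj (f0 : {set D}) (i : nat) : rel {set D} := fun f f' =>
  [&& f \in high_faces f0 i, f' \in high_faces f0 i &
      [exists v in vertices, (v :&: f != set0) && (v :&: f' != set0)]].

Definition level_comp (f0 : {set D}) (i : nat) (K : {set {set D}}) : bool :=
  [exists f in high_faces f0 i, K == [set f' | connect (high_adj f0 i) f f']].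

(* nodes of the component tree: level-i components for even i >= 2
   (levels are <= fv_bound, so larger i give no components) *)
Definition ctree_node (f0 : {set D}) (K : {set {set D}}) : bool :=
  [exists i : 'I_fv_bound.+2, [&& ~~ odd i, 2 <= i & level_comp f0 i K]].

(* depth in the component tree = number of proper ancestors *)
Definition ctree_depth (f0 : {set D}) (K : {set {set D}}) : nat :=
  #|[set K' | ctree_node f0 K' & K \proper K']|.

Definition ctree_cost (K : {set {set D}}) : nat :=
  #|[set E in edges | [exists d in E,
        (face_of d \in K) && (face_of (ed d) \notin K)]]|.

End PlaneMap.

(* Main.v *)
Require Import Defs.
From mathcomp Require Import all_boot all_order all_algebra.
From mathcomp Require Import zify.
Import Order.TTheory GRing.Theory Num.Theory.
Set Implicit Arguments. Unset Strict Implicit. Unset Printing Implicit Defensive.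

Section Helpers.
Variables (D : finType) (ed nd : D -> D).
Hypothesis edK : involutive ed.
Hypothesis nd_inj : injective nd.

Lemma fperm_inj : injective (fperm ed nd).
Proof. move=> x y; rewrite /fperm => /nd_inj; exact: (inv_inj edK). Qed.

Lemma vertex_eq a b : fconnect nd a b -> vertex_of nd a = vertex_of nd b.
Proof.
move=> h; apply/setP => z; rewrite !inE.
by rewrite (same_connect (fconnect_sym nd_inj) h).
Qed.

Lemma face_eq a b : fconnect (fperm ed nd) a b -> face_of ed nd a = face_of ed nd b.
Proof.
move=> h; apply/setP => z; rewrite !inE.
by rewrite (same_connect (fconnect_sym fperm_inj) h).
Qed.

Lemma card_classes (S : D -> {set D}) :
  (forall x, x \in S x) -> (forall x y, y \in S x -> S y = S x) ->
  #|D| = \sum_(A in [set S x | x : D]) #|A|.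
Proof.
move=> Sx Sy; rewrite -cardsT; apply: card_partition.
apply/and3P; split.
- rewrite eqEsubset subsetT /=; apply/subsetP => x _.
  apply/bigcupP; exists (S x) => //; exact: imset_f.
- apply/trivIsetP => A B /imsetP[a _ ->] /imsetP[b _ ->] nab.
  rewrite -setI_eq0; apply/eqP/setP => y; rewrite !inE.
  apply/negbTE/andP => -[ya yb]; move: nab; by rewrite -(Sy _ _ ya) (Sy _ _ yb) eqxx.
- apply/imsetP => -[x _ /setP/(_ x)]; by rewrite inE Sx.
Qed.

End Helpers.

Section Euler.
Variables (D : finType) (ed nd : D -> D).
Hypothesis edK : involutive ed.
Hypothesis ed_neq : forall d, ed d != d.
Hypothesis nd_inj : injective nd.

Lemma edges_card : #|D| = #|edges ed| * 2.
Proof.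
rewrite (@card_classes _ (edge_of ed)).
- rewrite -sum_nat_const; apply: eq_bigr => A /imsetP[x _ ->].
  by rewrite cards2 eq_sym ed_neq.
- by move=> x; rewrite !inE eqxx.
- move=> x y; rewrite !inE => /orP[/eqP -> // | /eqP ->].
  by rewrite /edge_of edK setUC.
Qed.

Lemma faces_card : (forall x, 3 <= #|face_of ed nd x|) -> #|faces ed nd| * 3 <= #|D|.
Proof.
move=> H3; rewrite (@card_classes _ (face_of ed nd)).
- rewrite -sum_nat_const; apply: leq_sum => A /imsetP[x _ ->]; exact: H3.
- by move=> x; rewrite inE connect0.
- move=> x y; rewrite inE => h; apply/esym/face_eq => //.
Qed.

Hypothesis Hsimple : map_simple ed nd.
Hypothesis Hconn : map_connected ed nd.

Lemma fperm_neq x : fperm ed nd x != x.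
Proof.
apply/negP => /eqP h; case: Hsimple => /(_ x) + _.
rewrite (@vertex_eq _ nd nd_inj (ed x) x) ?eqxx //.
by rewrite -{2}h /fperm; apply: fconnect1.
Qed.

Lemma fperm2_neq x : 3 <= #|D| -> fperm ed nd (fperm ed nd x) != x.
Proof.
move=> HD; apply/negP => /eqP h.
move: h; move x'E : (fperm ed nd x) => x' h.
have e1 : vertex_of nd (ed x) = vertex_of nd x'.
  by apply: vertex_eq => //; rewrite -x'E; apply: fconnect1.
have e2 : vertex_of nd x = vertex_of nd (ed x').
  rewrite -{1}h; apply/esym/vertex_eq => //; apply: fconnect1.
case: Hsimple => _ /(_ x (ed x') e2); rewrite edK => /(_ e1) ex.
have nx' : nd x' = x' by rewrite -{2}x'E /fperm ex edK.
have nx : nd x = x by rewrite -{2}h /fperm -ex.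
have edx : ed x = x' by rewrite ex edK.
clear x'E h.
have clo : forall a, a \in [set x; x'] -> (ed a \in [set x; x']) && (nd a \in [set x; x']).
  by move=> a; rewrite !inE => /orP[]/eqP->; rewrite ?edx -?ex ?nx ?nx' !eqxx ?orbT.
have gen : forall p a, a \in [set x; x'] ->
    path (fun u v => (v == ed u) || (v == nd u)) a p -> last a p \in [set x; x'].
  elim=> [|b p IH] a aS //=; case/andP => hab hp; apply: IH hp.
  by case/andP: (clo a aS); case/orP: hab => /eqP ->.
have sub : forall y, y \in [set x; x'].
  by move=> y; case/connectP: (Hconn x y) => p hp ->; apply: gen hp; rewrite set21.
have : #|D| <= 2.
  rewrite -cardsT; apply: (@leq_trans #|[set x; x']|).
    by apply: subset_leq_card; apply/subsetP => y _; exact: sub.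
  by rewrite cards2; case: (x != x').
by rewrite leqNgt (leq_trans _ HD).
Qed.

Lemma face_ge3 x : 3 <= #|D| -> 3 <= #|face_of ed nd x|.
Proof.
move=> HD.
set y := fperm ed nd x; set z := fperm ed nd y.
have : [set x; y; z] \subset face_of ed nd x.
  apply/subsetP => u; rewrite !inE => /orP[/orP[]|]/eqP->.
  - exact: connect0.
  - exact: fconnect1.
  - apply: (connect_trans (fconnect1 _ _)); exact: fconnect1.
move/subset_leq_card; apply: leq_trans.
rewrite -setUA cardsU1 cards2 !inE.
idtac.
by rewrite (eq_sym x y) (eq_sym x z) (eq_sym y z) /z /y (fperm_neq (fperm ed nd x)) (negbTE (fperm_neq x)) (negbTE (fperm2_neq x HD)).
Qed.

Lemma edges_le (d0 : D) : map_planar ed nd -> #|face_of ed nd d0| = 3 ->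
  #|edges ed| <= 3 * #|vertices nd|.
Proof.
move=> Hp H3.
have HD : 3 <= #|D| by rewrite -H3 max_card.
have F := faces_card (fun x => face_ge3 x HD).
have E := edges_card; rewrite /map_planar in Hp.
lia.
Qed.

End Euler.

Lemma bigmin_le (I : eqType) (r : seq I) (P : pred I) (F : I -> nat) b k :
  k \in r -> P k -> \big[minn/b]_(i <- r | P i) F i <= F k.
Proof.
elim: r => [//|a r IH]; rewrite inE big_cons => /orP[/eqP <- -> | kr Pk].
  exact: geq_minl.
case: (P a); last exact: IH.
exact: leq_trans (geq_minr _ _) (IH kr Pk).
Qed.

Lemma bigmin_leb (I : eqType) (r : seq I) (P : pred I) (F : I -> nat) b :
  \big[minn/b]_(i <- r | P i) F i <= b.
Proof.
elim: r => [|a r IH]; rewrite ?big_nil // big_cons; case: (P a) => //.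
exact: leq_trans (geq_minr _ _) IH.
Qed.

Lemma bigmin_cases (I : eqType) (r : seq I) (P : pred I) (F : I -> nat) b :
  \big[minn/b]_(i <- r | P i) F i = b \/
  exists2 k, (k \in r) && P k & \big[minn/b]_(i <- r | P i) F i = F k.
Proof.
elim: r => [|a r IH]; rewrite ?big_nil; first by left.
rewrite big_cons; case Pa: (P a).
  case: (leqP (F a) (\big[minn/b]_(j <- r | P j) F j)) => h.
    right; exists a; first by rewrite inE eqxx Pa.
    by [].
  idtac.
  case: IH => [->|[k /andP[kr Pk] ->]]; first by left.
  by right; exists k; rewrite ?inE ?kr ?Pk ?orbT.
case: IH => [->|[k /andP[kr Pk] ->]]; first by left.
by right; exists k; rewrite ?inE ?kr ?Pk ?orbT.
Qed.

Lemma card_sep (T : finType) (A : {set T}) (b : pred T) :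
  #|[set E in A | b E]| = \sum_(E in A) (b E : nat).
Proof.
rewrite -sum1_card big_mkcond [RHS]big_mkcond; apply: eq_bigr => E _.
by rewrite !inE; case: (E \in A); case: (b E).
Qed.

Lemma card_sep2 (T : finType) (P b : pred T) :
  \sum_(K | P K) (b K : nat) = #|[set K | P K && b K]|.
Proof.
rewrite -sum1_card big_mkcond [RHS]big_mkcond; apply: eq_bigr => E _.
by rewrite !inE; case: (P E); case: (b E).
Qed.

Section Levels.
Variables (D : finType) (ed nd : D -> D) (f0 : {set D}).
Hypothesis edK : involutive ed.
Hypothesis nd_inj : injective nd.

Local Notation lvl := (level ed nd f0).
Local Notation fvb := (fv_bound D).

Lemma level_leb x : lvl x <= fvb.
Proof. exact: bigmin_leb. Qed.

Lemma level_reach_le x k : x \in reach ed nd f0 k -> k <= fvb -> lvl x <= k.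
Proof.
move=> hx hk; rewrite /level.
have hk' : k < fvb.+1 by [].
exact: (@bigmin_le _ _ _ (fun i : 'I_fvb.+1 => nat_of_ord i) fvb (Ordinal hk') (mem_index_enum _)).
Qed.

Lemma level_reach x : lvl x < fvb -> x \in reach ed nd f0 (lvl x).
Proof.
rewrite /level.
case: (bigmin_cases (index_enum 'I_fvb.+1) (fun k : 'I_fvb.+1 => x \in reach ed nd f0 k)
         (fun i => nat_of_ord i) fvb) => [-> | [k /andP[_ Pk] ->]] //.
by rewrite ltnn.
Qed.

Lemma reach_step x y k : x \in reach ed nd f0 k -> fv_adj ed nd x y -> y \in reach ed nd f0 k.+1.
Proof.
move=> hx hxy; rewrite /= inE; apply/orP; right; rewrite inE.
by apply/existsP; exists x; rewrite hx.
Qed.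

Lemma level_step f g v : f \in faces ed nd -> g \in faces ed nd -> v \in vertices nd ->
  v :&: f != set0 -> v :&: g != set0 -> lvl (inr g) <= lvl (inr f) + 2.
Proof.
move=> hf hg hv vf vg.
case: (ltnP (lvl (inr f)) fvb) => h; last first.
  by apply: leq_trans (level_leb _) (leq_trans h (leq_addr _ _)).
have r1 := level_reach h.
have r2 : inr g \in reach ed nd f0 (lvl (inr f)).+2.
  apply: (@reach_step (inl v)); first apply: (@reach_step (inr f)) => //.
    by rewrite /fv_adj hv hf vf.
  by rewrite /fv_adj hv hg vg.
case: (leqP (lvl (inr f)).+2 fvb) => h2.
  by rewrite addn2; exact: level_reach_le.
by apply: leq_trans (level_leb _) _; rewrite addn2 ltnW.
Qed.

Local Notation adj := (high_adj ed nd f0).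
Local Notation H := (high_faces ed nd f0).

Lemma adj_sym i : symmetric (adj i).
Proof.
move=> f g; rewrite /high_adj.
apply/and3P/and3P => -[a b /existsP[v /andP[vv /andP[p q]]]]; split => //;
  by apply/existsP; exists v; rewrite vv p q.
Qed.

Lemma comp_facts i K f : level_comp ed nd f0 i K -> f \in K ->
  f \in H i /\ K = [set f' | connect (adj i) f f'].
Proof.
case/existsP => f1 /andP[hf1 /eqP ->]; rewrite inE => c; split.
  case/connectP: c => p; case/lastP: p => [|p g] /=; first by move=> _ ->.
  by rewrite rcons_path last_rcons => /andP[_ a] ->; case/and3P: a.
apply/setP => g; rewrite !inE.
by rewrite (same_connect (sym_connect_sym (adj_sym i)) c).
Qed.

Lemma share x : [/\ face_of ed nd x \in faces ed nd, face_of ed nd (ed x) \in faces ed nd,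
  vertex_of nd x \in vertices nd, vertex_of nd x :&: face_of ed nd x != set0 &
  vertex_of nd x :&: face_of ed nd (ed x) != set0].
Proof.
split; try exact: imset_f.
  by apply/set0Pn; exists x; rewrite !inE !connect0.
apply/set0Pn; exists (nd x); rewrite !inE; apply/andP; split; first exact: fconnect1.
have -> : nd x = fperm ed nd (ed x) by rewrite /fperm edK.
exact: fconnect1.
Qed.

Lemma node_info x K : ctree_node ed nd f0 K -> face_of ed nd x \in K ->
  face_of ed nd (ed x) \notin K ->
  exists i, [/\ ~~ odd i, lvl (inr (face_of ed nd (ed x))) < i, i <= lvl (inr (face_of ed nd x)) &
             K = [set f' | connect (adj i) (face_of ed nd x) f']].
Proof.
case/existsP => i /and3P[oi _ lc] hA hB.
have [hHA hK] := comp_facts lc hA.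
exists i; split => //; last by move: hHA; rewrite inE => /andP[].
rewrite ltnNge; apply/negP => hl.
case: (share x) => fA fB vV nA nB.
have hHB : face_of ed nd (ed x) \in H i by rewrite inE fB hl.
move: hB; rewrite hK inE; apply/negP/negPn.
apply: connect1; rewrite /high_adj hHA hHB /=.
by apply/existsP; exists (vertex_of nd x); rewrite vV nA nB.
Qed.

Lemma node_unique x K1 K2 :
  ctree_node ed nd f0 K1 -> face_of ed nd x \in K1 -> face_of ed nd (ed x) \notin K1 ->
  ctree_node ed nd f0 K2 -> face_of ed nd x \in K2 -> face_of ed nd (ed x) \notin K2 ->
  K1 = K2.
Proof.
move=> n1 a1 b1 n2 a2 b2.
have [i1 [o1 l1 u1 ->]] := node_info n1 a1 b1.
have [i2 [o2 l2 u2 ->]] := node_info n2 a2 b2.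
case: (share x) => fA fB vV nA nB.
have st : lvl (inr (face_of ed nd x)) <= lvl (inr (face_of ed nd (ed x))) + 2 := level_step fB fA vV nB nA.
suff -> : i1 = i2 by [].
move: l1 u1 l2 u2 st.
set a := lvl (inr (face_of ed nd x)).
set b := lvl (inr (face_of ed nd (ed x))).
move=> l1 u1 l2 u2 st.
have : i1 = i2 \/ i2 = i1.+1 \/ i1 = i2.+1 by clearbody a b; lia.
case=> [//|[] e]; subst; by move: o1 o2; rewrite oddS; case: (odd _).
Qed.

Lemma edge_count E : E \in edges ed ->
  #|[set K | ctree_node ed nd f0 K && [exists d in E,
        (face_of ed nd d \in K) && (face_of ed nd (ed d) \notin K)]]| <= 2.
Proof.
case/imsetP => x _ ->.
pose S y := [set K | [&& ctree_node ed nd f0 K, face_of ed nd y \in K &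
                        face_of ed nd (ed y) \notin K]].
have S1 : forall y, #|S y| <= 1.
  move=> y; apply/card_le1_eqP => K1 K2; rewrite !inE => /and3P[n1 a1 b1] /and3P[n2 a2 b2].
  by rewrite (node_unique n1 a1 b1 n2 a2 b2).
apply: (@leq_trans #|S x :|: S (ed x)|).
  apply: subset_leq_card; apply/subsetP => K; rewrite !inE => /andP[nK /existsP[d /andP[]]].
  by rewrite !inE => /orP[]/eqP -> /andP[p q]; rewrite nK p q ?orbT.
rewrite cardsU; apply: leq_trans (leq_subr _ _) _; exact: leq_add (S1 x) (S1 (ed x)).
Qed.

End Levels.

Local Open Scope ring_scope.

Theorem lemma5 :
  exists c : rat,
  forall (D : finType) (ed nd : D -> D) (d0 : D),
    is_map ed nd -> map_connected ed nd -> map_planar ed nd ->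
    map_simple ed nd ->
    (* the infinite face face_of d0 is bounded by a triangle *)
    #|face_of ed nd d0| = 3%N ->
    forall w : nat, (1 <= w)%N ->
      exists2 delta : nat, (delta < w)%N &
        (\sum_(K : {set {set D}} |
               ctree_node ed nd (face_of ed nd d0) K &&
               (ctree_depth ed nd (face_of ed nd d0) K %% w == delta)%N)
            (ctree_cost ed nd K))%:R
        <= c * (#|vertices nd|)%:R / w%:R.
Proof.
exists 6%:R.
move=> D ed nd d0 [edK [edn ndi]] Hc Hp Hs H3 w w1.
set f0 := face_of ed nd d0.
pose T := (\sum_(K | ctree_node ed nd f0 K) ctree_cost ed nd K)%N.
have HT : (T <= 2 * #|edges ed|)%N.
  rewrite /T.
  under eq_bigr => K _ do rewrite /ctree_cost card_sep.
  rewrite exchange_big /=.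
  apply: (@leq_trans (\sum_(E in edges ed) 2)%N); last by rewrite sum_nat_const mulnC.
  apply: leq_sum => E hE; rewrite card_sep2; exact: edge_count.
have HE := edges_le edK edn ndi Hs Hc Hp H3.
pose S (j : nat) := (\sum_(K : {set {set D}} |
               ctree_node ed nd f0 K && (ctree_depth ed nd f0 K %% w == j)%N)
            (ctree_cost ed nd K))%N.
have HS : (\sum_(j < w) S j)%N = T.
  rewrite /T (partition_big (fun K => Ordinal (ltn_pmod (ctree_depth ed nd f0 K) w1)) xpredT) //=.
case: (pickP (fun j : 'I_w => (S j * w <= T)%N)) => [j Hj | none]; last first.
  have : (\sum_(j < w) T.+1 <= \sum_(j < w) S j * w)%N.
    apply: leq_sum => j _; move: (none j) => /= /negbT; rewrite -ltnNge; exact.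
  rewrite sum_nat_const card_ord -big_distrl /= HS; lia.
exists (nat_of_ord j) => //.
rewrite ler_pdivlMr ?ltr0n // -natrM -natrM ler_nat.
rewrite /= in Hj; rewrite /S in Hj; lia.
Qed.
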